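(* Let $\Omega$ be a compact Hausdorff space, let $E\subset \Omega$ be a closed set, and let $J=\{f\in C(\Omega): f(e)=0 \text{ for all } e\in E\}$. Then the pair $(C(\Omega),J)$ has the compact quotient lifting property (CQLP).
   Context: $C(\Omega)$ denotes the Banach space of real-valued continuous functions on $\Omega$ with the supremum norm. For a Banach space $X$ and a closed subspace $J\subset X$, let $\pi:X\to X/J$ be the quotient map. The pair $(X,J)$ has the compact quotient lifting property (CQLP) if for every Banach space $Z$ and every compact linear operator $T:Z\to X/J$ there is a compact linear operator $S:Z\to X$ with $\pi\circ S=T$ and $\|S\|=\|T\|$. *)

(* Defs.v *)
From HB Require Import structures.
From mathcomp Require Import all_boot all_order all_algebra.
From mathcomp Require Import all_classical all_reals all_analysis.
Set Implicit Arguments. Unset Strict Implicit. Unset Printing Implicit Defensive.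
Import Order.TTheory GRing.Theory Num.Theory.
Import numFieldNormedType.Exports.
Local Open Scope classical_set_scope.
Local Open Scope ring_scope.

Section Defs.
Context {T : topologicalType} {R : realType}.

Definition supnorm (f : T -> R) : R := sup [set `|f x| | x in [set: T]].

Definition qnorm (J : set (T -> R)) (f : T -> R) : R :=
  inf [set supnorm (fun x => f x - g x) | g in J].

(* a set A of (representatives of) elements of C(T) (resp. C(T)/J, with
   p = qnorm J) is relatively compact for the (semi)norm p: every sequence
   in A has a subsequence converging for p to some element of C(T)
   (resp. C(T)/J). *)
Definition seq_rel_compact (p : (T -> R) -> R) (A : set (T -> R)) : Prop :=
  forall u : nat -> T -> R, (forall n, A (u n)) ->
  exists phi : nat -> nat, {homo phi : m n / (m < n)%N} /\
    exists g : T -> R, continuous g /\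
      (fun n => p (fun x => u (phi n) x - g x)) @ \oo --> (0 : R).

Definition unit_ball (Z : normedModType R) : set Z := [set z | `|z| <= 1].

Definition compact_op (Z : normedModType R) (p : (T -> R) -> R)
  (t : Z -> T -> R) : Prop := seq_rel_compact p (t @` (@unit_ball Z)).

Definition op_norm (Z : normedModType R) (p : (T -> R) -> R)
  (t : Z -> T -> R) : R := sup [set p (t z) | z in (@unit_ball Z)].

(* A linear operator Tq : Z -> C(T)/J is represented by a
   function t : Z -> C(T) choosing a representative of each class Tq z;
   linearity of Tq means linearity of t modulo J, and pi o S = Tq means
   S z - t z lies in J for all z. *)
Definition CQLP_C (J : set (T -> R)) : Prop :=
  forall (Z : completeNormedModType R) (t : Z -> T -> R),
    (forall z, continuous (t z)) ->
    (forall (a : R) (z w : Z),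
        J (fun x => t (a *: z + w) x - (a * t z x + t w x))) ->
    compact_op (qnorm J) t ->
    exists s : Z -> T -> R,
      [/\ (forall z, continuous (s z)),
          (forall (a : R) (z w : Z) (x : T),
              s (a *: z + w) x = a * s z x + s w x),
          compact_op supnorm s,
          (forall z, J (fun x => s z x - t z x)) &
          op_norm supnorm s = op_norm (qnorm J) t].

End Defs.

(* Main.v *)
Require Import Defs.
From HB Require Import structures.
From mathcomp Require Import all_boot all_order all_algebra.
From mathcomp Require Import all_classical all_reals all_analysis.
From mathcomp Require Import ring lra.
From mathcomp Require Import finmap.
Set Implicit Arguments. Unset Strict Implicit. Unset Printing Implicit Defensive.
Import Order.TTheory GRing.Theory Num.Theory.
Import numFieldNormedType.Exports.
Local Open Scope classical_set_scope.
Local Open Scope ring_scope.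

Section Basics.
Context {T : topologicalType} {R : realType}.
Hypothesis hcpt : compact [set: T].

Lemma cont_bounded (f : T -> R) : continuous f ->
  exists B : R, 0 <= B /\ forall x, `|f x| <= B.
Proof.
move=> cf.
have : compact (f @` setT) by apply: continuous_compact => //; exact: continuous_subspaceT.
move=> /(@compact_bounded R R^o) [M [Mr HM]].
exists (Num.max (M + 1) 0); split; first by rewrite le_max lexx orbT.
move=> x; have := HM (M + 1); rewrite ltrDl ltr01 => /(_ isT (f x)).
move=> /(_ (ex_intro2 _ _ x I erefl)) /= h.
by rewrite le_max h.
Qed.

Lemma supnorm_ge (f : T -> R) x : continuous f -> `|f x| <= supnorm f.
Proof.
move=> /cont_bounded [B [B0 HB]].
apply: sup_upper_bound; last by exists x.
split; first by exists `|f x|; exists x.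
by exists B => _ [y _ <-].
Qed.

Lemma supnorm_le (f : T -> R) B : 0 <= B -> (forall x, `|f x| <= B) -> supnorm f <= B.
Proof.
move=> B0 HB; rewrite /supnorm.
have [[x _]|] := pselect ([set: T] !=set0).
  apply: ge_sup; first by exists `|f x|; exists x.
  by move=> _ [y _ <-]; exact: HB.
move=> ne; suff -> : [set `|f x| | x in [set: T]] = set0 by rewrite sup0.
by apply/seteqP; split => // z [y _ _]; apply: ne; exists y.
Qed.

Lemma supnorm_ge0 (f : T -> R) : 0 <= supnorm f.
Proof.
rewrite /supnorm.
have [[x _]|] := pselect ([set: T] !=set0).
  have [hs|hs] := pselect (has_sup [set `|f x| | x in [set: T]]).
    have h := sup_upper_bound hs; have := h `|f x|; rewrite /ubound /=.
    by move=> /(_ (ex_intro2 _ _ x I erefl)); apply: le_trans.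
  by rewrite sup_out.
move=> ne; suff -> : [set `|f x| | x in [set: T]] = set0 by rewrite sup0.
by apply/seteqP; split => // z [y _ _]; apply: ne; exists y.
Qed.

End Basics.

Section Cts.
Context {T : topologicalType} {R : realType}.
Implicit Types f g : T -> R.

Lemma ctsD f g : continuous f -> continuous g -> continuous (fun x => f x + g x).
Proof. by move=> cf cg x; apply: cvgD; [exact: cf|exact: cg]. Qed.
Lemma ctsB f g : continuous f -> continuous g -> continuous (fun x => f x - g x).
Proof. by move=> cf cg x; apply: cvgB; [exact: cf|exact: cg]. Qed.
Lemma ctsM f g : continuous f -> continuous g -> continuous (fun x => f x * g x).
Proof. by move=> cf cg x; apply: cvgM; [exact: cf|exact: cg]. Qed.
Lemma ctsC (c : R) : continuous (fun _ : T => c).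
Proof. by move=> x; exact: cvg_cst. Qed.
Lemma ctsN f : continuous f -> continuous (fun x => - f x).
Proof. by move=> cf x; apply: cvgN; exact: cf. Qed.
Lemma ctsA f : continuous f -> continuous (fun x => `|f x|).
Proof. by move=> cf x; apply: cvg_norm; exact: cf. Qed.
Lemma ctsMax f g : continuous f -> continuous g ->
  continuous (fun x => Num.max (f x) (g x)).
Proof. by move=> cf cg x; apply: (@continuous_max R T f g x); [exact: cf|exact: cg]. Qed.
Lemma ctsV f : (forall x, f x != 0) -> continuous f -> continuous (fun x => (f x)^-1).
Proof. by move=> nz cf x; apply: cvgV; [exact: nz| exact: cf]. Qed.
Lemma ctsSum (I : Type) (s : seq I) (F : I -> T -> R) :
  (forall i, continuous (F i)) -> continuous (fun x => \sum_(i <- s) F i x).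
Proof.
move=> cF; elim: s => [|i s IH].
  by under eq_fun do rewrite big_nil; exact: ctsC.
by under eq_fun do rewrite big_cons; apply: ctsD.
Qed.
Lemma ctsBigmax (I : Type) (s : seq I) (F : I -> T -> R) :
  (forall i, continuous (F i)) -> continuous (fun x => \big[Num.max/0]_(i <- s) F i x).
Proof.
move=> cF; elim: s => [|i s IH].
  by under eq_fun do rewrite big_nil; exact: ctsC.
by under eq_fun do rewrite big_cons; apply: ctsMax.
Qed.
End Cts.

Section Q.
Context {T : topologicalType} {R : realType}.
Hypothesis hcpt : compact [set: T].
Variable E : set T.
Let J := [set f : T -> R | continuous f /\ forall e, E e -> f e = 0].
Implicit Types f g : T -> R.

Lemma J0 : J (fun _ => 0).
Proof. by split => //; exact: ctsC. Qed.

Lemma qnorm_ge0 f : 0 <= qnorm J f.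
Proof.
apply: lb_le_inf; first by exists (supnorm (fun x => f x - 0)), (fun _ => 0) => //; exact: J0.
by move=> _ [g _ <-]; exact: supnorm_ge0.
Qed.

Lemma qnorm_ge f e : continuous f -> E e -> `|f e| <= qnorm J f.
Proof.
move=> cf Ee.
apply: lb_le_inf; first by exists (supnorm (fun x => f x - 0)), (fun _ => 0) => //; exact: J0.
move=> _ [g [cg g0] <-].
have := @supnorm_ge _ _ hcpt (fun x => f x - g x) e (ctsB cf cg).
by rewrite g0 // subr0.
Qed.

Lemma qnorm_le f g : J g -> qnorm J f <= supnorm (fun x => f x - g x).
Proof.
move=> Jg; apply: ge_inf; last by exists g.
by exists 0 => _ [h _ <-]; exact: supnorm_ge0.
Qed.

Lemma supnormD f g : continuous f -> continuous g ->
  supnorm (fun x => f x + g x) <= supnorm f + supnorm g.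
Proof.
move=> cf cg; apply: supnorm_le; first by rewrite addr_ge0 // supnorm_ge0.
move=> x; apply: le_trans (ler_normD _ _) _.
by rewrite lerD // (supnorm_ge hcpt).
Qed.

Lemma qnorm_tri f g : continuous f -> continuous g ->
  qnorm J f <= qnorm J (fun x => f x - g x) + supnorm g.
Proof.
move=> cf cg; rewrite -lerBlDr.
apply: lb_le_inf; first by exists (supnorm (fun x => (f x - g x) - 0)), (fun _ => 0) => //; exact: J0.
move=> _ [h [ch h0] <-]; rewrite lerBlDr.
apply: le_trans (qnorm_le f (conj ch h0)) _.
have -> : (fun x => f x - h x) = (fun x => (f x - g x - h x) + g x).
  by apply: funext => x; rewrite addrAC subrK.
by apply: supnormD => //; apply: ctsB => //; exact: ctsB.
Qed.

End Q.

Lemma compact_cover' (T : topologicalType) (A : set T) : compact A -> cover_compact A.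
Proof.
move=> cA; have [[x _]|A0] := pselect (A !=set0).
  pose pT : ptopologicalType := HB.pack T (isPointed.Build T x).
  have h := @compact_cover pT.
  have : @compact pT A by exact: cA.
  by rewrite h.
move=> I D f _ _; exists fset0 => // y Ay; exfalso; by apply: A0; exists y.
Qed.

Lemma ler_sum_seq' (R : numDomainType) (I : eqType) (r : seq I) (F G : I -> R) :
  (forall i, i \in r -> F i <= G i) -> \sum_(i <- r) F i <= \sum_(i <- r) G i.
Proof. by move=> h; rewrite big_seq [X in _ <= X]big_seq; apply: ler_sum. Qed.

Lemma sum_ge_term (R : numDomainType) (I : eqType) (r : seq I) (F : I -> R) i :
  (forall j, 0 <= F j) -> i \in r -> F i <= \sum_(j <- r) F j.
Proof.
move=> F0; elim: r => [//|j r IH]; rewrite in_cons big_cons => /orP[/eqP <-|ir].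
  by rewrite lerDl sumr_ge0.
by rewrite (le_trans (IH ir)) // lerDr.
Qed.

Lemma cauchy_cvgn {R : realType} (a : nat -> R) :
  (forall eps, 0 < eps -> exists N, forall n, (N <= n)%N -> `|a n - a N| <= eps) ->
  cvgn a.
Proof.
move=> hc; apply/cauchy_cvgP/cauchy_exP => e e0.
have e2 : 0 < e / 2 by rewrite divr_gt0.
have [N hN] := hc _ e2; exists (a N); exists N => // k /= Nk.
rewrite -ball_normE /ball_ /= distrC (le_lt_trans (hN _ Nk)) //.
by rewrite ltr_pdivrMr // ltr_pMr // ltr1n.
Qed.

Lemma lim_bound {R : realType} (a : nat -> R) n B : cvgn a ->
  (forall k, (n <= k)%N -> `|a k - a n| <= B) -> `|limn a - a n| <= B.
Proof.
move=> ca hab; rewrite leNgt; apply/negP => hlt.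
set l := limn a in hlt.
have e0 : 0 < `|l - a n| - B by rewrite subr_gt0.
move: ca => /cvgrPdist_lt /(_ _ e0) [N _ HN].
have := HN (maxn N n) (leq_maxl _ _); rewrite -/l.
have := hab (maxn N n) (leq_maxr _ _).
set y := a (maxn N n) => h1 h2.
have h3 : `|l - a n| <= `|l - y| + `|y - a n|.
  by rewrite (_ : l - a n = (l - y) + (y - a n)); [exact: ler_normD | ring].
lra.
Qed.

Lemma half_small {R : realType} (K eps : R) : 0 < eps -> exists N, K * (1/2) ^+ N < eps.
Proof.
move=> e0; have : `|(1/2 : R)| < 1.
  by rewrite ger0_norm ?divr_ge0 // ltr_pdivrMr // mul1r ltr1n.
move=> /(cvg_geometric K) /cvgrPdist_lt /(_ _ e0) [N _ HN].
exists N; have := HN N (leqnn N); rewrite sub0r normrN /=.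
by apply: le_lt_trans; exact: ler_norm.
Qed.

Lemma half_zero {R : realType} (a K : R) : (forall n, `|a| <= K * (1/2) ^+ n) -> a = 0.
Proof.
move=> h; apply/eqP; apply: contraT => an0.
have a0 : 0 < `|a| by rewrite normr_gt0.
have [N hN] := half_small K a0.
by have := lt_le_trans hN (h N); rewrite ltxx.
Qed.

Lemma homo_ge (phi : nat -> nat) : {homo phi : m n / (m < n)%N} -> forall n, (n <= phi n)%N.
Proof. by move=> inc; elim=> // n IH; apply: leq_ltn_trans IH (inc _ _ (ltnSn n)). Qed.

Section Main.
Context {T : topologicalType} {R : realType} (E : set T).
Hypothesis hcpt : compact [set: T].
Hypothesis hE : closed E.
Let J := [set f : T -> R | continuous f /\ forall e, E e -> f e = 0].
Context (Z : completeNormedModType R) (t : Z -> T -> R).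
Hypothesis tc : forall z, continuous (t z).
Hypothesis tlin : forall (a : R) (z w : Z),
        J (fun x => t (a *: z + w) x - (a * t z x + t w x)).
Hypothesis tcomp : compact_op (qnorm J) t.

Lemma tlinE a z w e : E e -> t (a *: z + w) e = a * t z e + t w e.
Proof. by move=> Ee; apply/eqP; rewrite -subr_eq0; apply/eqP; apply: (tlin a z w).2. Qed.

Lemma tbounded : exists B, forall z, `|z| <= 1 -> qnorm J (t z) <= B.
Proof.
apply: contrapT => nB.
have H : forall n : nat, exists z, `|z| <= 1 /\ n%:R < qnorm J (t z).
  move=> n; apply: contrapT => Hn; apply: nB; exists n%:R => z z1.
  rewrite leNgt; apply/negP => lt; apply: Hn; exists z; split => //.
have [zn Hzn] := choice H.
have tc' : seq_rel_compact (qnorm J) (t @` (@unit_ball R Z)) := tcomp.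
have [n|phi [inc [g [cg cv]]]] := tc' (fun n => t (zn n)).
  by exists (zn n) => //; exact: (Hzn n).1.
move: cv => /cvgrPdist_le /(_ 1 ltr01) [N _ HN].
pose K := (Num.truncn (1 + supnorm g)).+1.
pose n := maxn N K.
have hN := HN n (leq_maxl N K).
have hq : qnorm J (t (zn (phi n))) <= 1 + supnorm g.
  apply: le_trans (qnorm_tri hcpt E (@tc _) cg) _.
  by rewrite lerD2r; move: hN; rewrite sub0r normrN ger0_norm // qnorm_ge0.
have h3 : ((phi n)%:R : R) < 1 + supnorm g := lt_le_trans (Hzn (phi n)).2 hq.
have h4 : 1 + supnorm g < ((phi n)%:R : R).
  apply: lt_le_trans (truncnS_gt _) _; rewrite ler_nat.
  by apply: leq_trans (homo_ge inc n); exact: leq_maxr.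
by have := lt_trans h3 h4; rewrite ltxx.
Qed.

Let tc' : seq_rel_compact (qnorm J) (t @` (@unit_ball R Z)) := tcomp.

Let M := op_norm (qnorm J) t.

Lemma qM z : `|z| <= 1 -> qnorm J (t z) <= M.
Proof.
move=> z1; have [B HB] := tbounded.
apply: sup_upper_bound; last by exists z.
split; first by exists (qnorm J (t 0)), 0 => //; rewrite /unit_ball /= normr0 ler01.
by exists B => _ [w w1 <-]; exact: HB.
Qed.

Lemma M0 : 0 <= M.
Proof. by apply: le_trans (qnorm_ge0 E _) (qM (z := 0) _); rewrite normr0 ler01. Qed.

Lemma lin_bound (F : Z -> R) c : (forall a z w, F (a *: z + w) = a * F z + F w) ->
  (forall z, `|z| <= 1 -> `|F z| <= c) -> forall z, `|F z| <= c * `|z|.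
Proof.
move=> Fl Fb z.
have F0 : F 0 = 0.
  have := Fl 1 0 0; rewrite scaler0 add0r mul1r => h.
  by apply/(addrI (F 0)); rewrite addr0 -h.
have [->|nz] := eqVneq z 0; first by rewrite F0 !normr0 mulr0.
have n0 : 0 < `|z| by rewrite normr_gt0.
pose w := `|z|^-1 *: z.
have zw : z = `|z| *: w + 0 by rewrite addr0 /w scalerA divff ?scale1r // gt_eqF.
have -> : F z = `|z| * F w by rewrite {1}zw Fl F0 addr0.
rewrite normrM (ger0_norm (ltW n0)) mulrC ler_pM2r //.
apply: Fb; rewrite /w normrZ normfV normr_id mulVf // gt_eqF //.
Qed.

Lemma tE_bound z e : E e -> `|t z e| <= M * `|z|.
Proof.
move=> Ee; apply: (lin_bound (F := fun z => t z e)) => [a w v|w w1].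
  exact: tlinE.
by apply: le_trans (qnorm_ge hcpt (@tc _) Ee) (qM w1).
Qed.

Lemma NET eta : 0 < eta -> exists zs : seq Z, (forall z, z \in zs -> `|z| <= 1) /\
  forall z, `|z| <= 1 -> exists2 z', z' \in zs & forall e, E e -> `|t z e - t z' e| <= eta.
Proof.
move=> eta0; apply: contrapT => nN.
pose far z z' := exists2 e, E e & eta < `|t z e - t z' e|.
have H : forall zs : seq Z, exists z, (forall z, z \in zs -> `|z| <= 1) ->
    `|z| <= 1 /\ forall z', z' \in zs -> far z z'.
  move=> zs; have [Hzs|nH] := pselect (forall z, z \in zs -> `|z| <= 1); last first.
    by exists 0.
  apply: contrapT => H'; apply: nN; exists zs; split => // z z1.
  apply: contrapT => h; apply: H'; exists z => _; split => // z' hz'.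
  apply: contrapT => nf; apply: h; exists z' => // e Ee.
  by rewrite leNgt; apply/negP => lt; apply: nf; exists e.
have [nxt Hnxt] := choice H.
pose build := fix build n := if n is n'.+1 then rcons (build n') (nxt (build n')) else [::].
have bb : forall n z, z \in build n -> `|z| <= 1.
  elim=> [//|n IH] z /=; rewrite mem_rcons in_cons => /orP[/eqP ->|]; last exact: IH.
  by have [] := Hnxt (build n) (IH).
pose u n := nxt (build n).
have ub n : `|u n| <= 1 by have [] := Hnxt (build n) (bb n).
have uf n z' : z' \in build n -> far (u n) z'.
  by have [_] := Hnxt (build n) (bb n); apply.
have um : forall n k, (k < n)%N -> u k \in build n.
  elim=> [//|n IH] k; rewrite ltnS leq_eqVlt => /orP[/eqP ->|kn] /=.
    by rewrite mem_rcons mem_head.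
  by rewrite mem_rcons in_cons IH // orbT.
have [n|phi [inc [g [cg cv]]]] := @tc' (fun n => t (u n)).
  by exists (u n) => //; exact: ub.
have eta2 : 0 < eta / 2 by rewrite divr_gt0.
move: cv => /cvgrPdist_le /(_ _ eta2) [N _ HN].
have [e Ee hfar] := uf _ _ (um _ _ (inc _ _ (ltnSn N))).
have h1 := HN N (leqnn N); have h2 := HN N.+1 (leqnSn N).
rewrite sub0r normrN ger0_norm ?qnorm_ge0 // in h1.
rewrite sub0r normrN ger0_norm ?qnorm_ge0 // in h2.
have k1 := le_trans (qnorm_ge hcpt (ctsB (@tc (u (phi N))) cg) Ee) h1.
have k2 := le_trans (qnorm_ge hcpt (ctsB (@tc (u (phi N.+1))) cg) Ee) h2.
have : `|t (u (phi N.+1)) e - t (u (phi N)) e| <= eta.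
  have -> : t (u (phi N.+1)) e - t (u (phi N)) e =
     (t (u (phi N.+1)) e - g e) - (t (u (phi N)) e - g e) by rewrite opprB addrA subrK.
  apply: le_trans (ler_normB _ _) _.
  by rewrite (splitr eta) lerD.
by rewrite leNgt hfar.
Qed.

Definition dom (Rf : Z -> T -> R) (C : R) :=
  forall z z' eta, `|z| <= 1 -> `|z'| <= 1 -> 0 <= eta ->
  (forall e, E e -> `|t z e - t z' e| <= eta) -> forall e, E e -> `|Rf z e - Rf z' e| <= C * eta.

Lemma Ecompact : compact E.
Proof. exact: (subclosed_compact hE hcpt). Qed.

Lemma approx (Rf : Z -> T -> R) (m C delta : R) :
  0 <= m -> 0 <= C -> 0 < delta ->
  (forall z, continuous (Rf z)) ->
  (forall a z w e, E e -> Rf (a *: z + w) e = a * Rf z e + Rf w e) ->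
  (forall z e, E e -> `|Rf z e| <= m * `|z|) ->
  dom Rf C ->
  exists L : Z -> T -> R,
   [/\ forall z, continuous (L z),
       forall a z w x, L (a *: z + w) x = a * L z x + L w x,
       forall z x, `|L z x| <= m * `|z|,
       (forall z z' eta, `|z| <= 1 -> `|z'| <= 1 -> 0 <= eta ->
         (forall e, E e -> `|t z e - t z' e| <= eta) -> forall x, `|L z x - L z' x| <= C * eta) &
       forall z e, E e -> `|Rf z e - L z e| <= delta * `|z|].
Proof.
move=> m0 C0 d0 Rc Rl Rb Rd.
pose eta := delta / 3 / (C + 1).
have C1 : 0 < C + 1 by rewrite ltr_wpDl.
have d3 : 0 < delta / 3 by rewrite divr_gt0.
have eta0 : 0 < eta by rewrite divr_gt0.
have Ceta : C * eta <= delta / 3.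
  rewrite /eta mulrCA ger_pMr // ler_pdivrMr // mul1r lerDl //.
have [zs [zsb zsnet]] := NET eta0.
pose D p x := \big[Num.max/0]_(z <- zs) `|Rf z x - Rf z p|.
have Dc p : continuous (D p).
  by apply: ctsBigmax => z; apply: ctsA; apply: ctsB => //; exact: ctsC.
have Dge p x z : z \in zs -> `|Rf z x - Rf z p| <= D p x.
  by move=> zin; exact: (Order.TotalTheory.le_bigmax_seq 0 z xpredT (fun z => `|Rf z x - Rf z p|) zin isT).
have Dpp p : D p p = 0.
  rewrite /D; elim: (zs) => [|z s IH]; first by rewrite big_nil.
  by rewrite big_cons IH subrr normr0 maxxx.
have key p e z : E p -> E e -> `|z| <= 1 -> D p e < delta / 3 -> `|Rf z e - Rf z p| <= delta.
  move=> Ep Ee z1 Dlt.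
  have [z' z'in hz'] := zsnet z z1.
  have h1 := Rd z z' eta z1 (zsb _ z'in) (ltW eta0) hz' e Ee.
  have h2 := Rd z z' eta z1 (zsb _ z'in) (ltW eta0) hz' p Ep.
  have h3 := Dge p e z' z'in.
  have -> : Rf z e - Rf z p = (Rf z e - Rf z' e) + (Rf z' e - Rf z' p) - (Rf z p - Rf z' p).
    by ring.
  apply: le_trans (ler_normB _ _) _; apply: le_trans (lerD (ler_normD _ _) (lexx _)) _.
  have -> : delta = delta / 3 + delta / 3 + delta / 3.
    by field.
  rewrite !lerD //; first exact: le_trans h1 Ceta.
    exact: le_trans h3 (ltW Dlt).
  exact: le_trans h2 Ceta.
have d6 : 0 < delta / 6 by rewrite divr_gt0.
have [ps psE psc] : finite_subset_cover E (fun p => [set x | D p x < delta / 6]) E.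
  have Ec : cover_compact E by exact: compact_cover' Ecompact.
  apply: Ec.
    move=> p _.
    have -> : [set x | D p x < delta / 6] = D p @^-1` [set y : R | y < delta / 6] by [].
    by apply: open_comp => [x _|]; [exact: Dc | exact: open_lt].
  by move=> p Ep; exists p => //=; rewrite Dpp.
set ss := enum_fset ps.
have psE' : forall p, p \in ss -> E p.
  by move=> p pin; have := psE p pin; rewrite in_setE.
have psc' : forall e, E e -> exists2 p, p \in ss & D p e < delta / 6.
  by move=> e /psc [p pin hp]; exists p.
pose w p x := Num.max 0 (delta / 3 - D p x).
pose W x := \sum_(p <- ss) w p x.
pose c := delta / 6.
pose V p x := w p x / Num.max (W x) c.
have w0 p x : 0 <= w p x by rewrite le_max lexx.
have wc p : continuous (w p) by apply: ctsMax; [exact: ctsC|apply: ctsB; [exact: ctsC|exact: Dc]].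
have Wc : continuous W by apply: ctsSum.
have mc x : 0 < Num.max (W x) c by rewrite lt_max d6 orbT.
have V0 p x : 0 <= V p x by rewrite divr_ge0 // ltW.
have Vc p : continuous (V p).
  apply: ctsM => //; apply: ctsV; first by move=> x; rewrite gt_eqF.
  by apply: ctsMax => //; exact: ctsC.
have SV x : \sum_(p <- ss) V p x = W x / Num.max (W x) c by rewrite /W mulr_suml.
have SV1 x : \sum_(p <- ss) V p x <= 1.
  by rewrite SV ler_pdivrMr // mul1r le_max lexx.
have SVE e : E e -> \sum_(p <- ss) V p e = 1.
  move=> Ee; have [p pin hp] := psc' e Ee.
  have Wge : c <= W e.
    apply: le_trans (sum_ge_term (F := fun q => w q e) (w0^~ e) pin).
    rewrite le_max; apply/orP; right; rewrite /c.
    have -> : delta / 6 = delta / 3 - delta / 6 by field.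
    by rewrite lerB // ltW.
  rewrite SV (_ : Num.max (W e) c = W e); last exact/max_idPl.
  by rewrite divff // gt_eqF // (lt_le_trans d6).
have Vpos p e : 0 < V p e -> D p e < delta / 3.
  move=> Vp; have : 0 < w p e.
    by rewrite lt_def w0 andbT; apply/negP => /eqP h; move: Vp; rewrite /V h mul0r ltxx.
  by rewrite lt_max ltxx /= subr_gt0.
exists (fun z x => \sum_(p <- ss) V p x * Rf z p); split.
- by move=> z; apply: ctsSum => p; apply: ctsM => //; exact: ctsC.
- move=> a z v x.
  rewrite (eq_big_seq (fun p => a * (V p x * Rf z p) + V p x * Rf v p)); last first.
    by move=> p pin; rewrite Rl; [ring|exact: psE'].
  by rewrite big_split /= mulr_sumr.
- move=> z x; apply: le_trans (ler_norm_sum _ _ _) _.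
  apply: le_trans (_ : \sum_(p <- ss) V p x * (m * `|z|) <= _).
    apply: ler_sum_seq' => p pin; rewrite normrM ger0_norm //.
    by apply: ler_wpM2l => //; apply: Rb; exact: psE'.
  by rewrite -mulr_suml ler_piMl // mulr_ge0.
- move=> z z' eta' z1 z'1 eta'0 hzz x; rewrite -sumrB.
  apply: le_trans (ler_norm_sum _ _ _) _.
  have Ceta0 : 0 <= C * eta' by rewrite mulr_ge0.
  apply: le_trans (_ : \sum_(p <- ss) V p x * (C * eta') <= _).
    apply: ler_sum_seq' => p pin; rewrite -mulrBr normrM ger0_norm //.
    by apply: ler_wpM2l => //; apply: Rd => //; exact: psE'.
  by rewrite -mulr_suml ler_piMl.
move=> z e Ee.
apply: (lin_bound (F := fun z => Rf z e - \sum_(p <- ss) V p e * Rf z p)) => [a u v|u u1].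
  rewrite Rl // (eq_big_seq (fun p => a * (V p e * Rf u p) + V p e * Rf v p)); last first.
    by move=> p pin; rewrite Rl; [ring|exact: psE'].
  by rewrite big_split /= -mulr_sumr; ring.
have -> : Rf u e - \sum_(p <- ss) V p e * Rf u p = \sum_(p <- ss) V p e * (Rf u e - Rf u p).
  by rewrite -[X in X - _]mul1r -(SVE e Ee) mulr_suml -sumrB; apply: eq_bigr => p _; ring.
apply: le_trans (ler_norm_sum _ _ _) _.
apply: le_trans (_ : \sum_(p <- ss) V p e * delta <= _); last by rewrite -mulr_suml SVE // mul1r.
apply: ler_sum_seq' => p pin; rewrite normrM ger0_norm //.
have [->|Vn] := eqVneq (V p e) 0; first by rewrite !mul0r.
apply: ler_wpM2l => //; apply: key => //; first exact: psE'.
by apply: Vpos; rewrite lt_def Vn V0.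
Qed.

Definition mm (n : nat) : R := if n is 0%N then M else (1/2) ^+ n.

Lemma mm0 n : 0 <= mm n.
Proof. by case: n => [|n] /=; [exact: M0 | rewrite exprn_ge0 // divr_ge0]. Qed.

Lemma mm_le n : mm n <= (M + 1) * (1/2) ^+ n.
Proof.
case: n => [|n] /=; first by rewrite expr0 mulr1 lerDl.
by rewrite ler_peMl ?exprn_ge0 ?divr_ge0 // lerDr M0.
Qed.

Definition Hyp (Rf : Z -> T -> R) (n : nat) :=
  [/\ forall z, continuous (Rf z),
      forall a z w e, E e -> Rf (a *: z + w) e = a * Rf z e + Rf w e,
      forall z e, E e -> `|Rf z e| <= mm n * `|z| &
      dom Rf (2 ^+ n)].

Definition Props (L Rf : Z -> T -> R) (n : nat) :=
  [/\ forall z, continuous (L z),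
       forall a z w x, L (a *: z + w) x = a * L z x + L w x,
       forall z x, `|L z x| <= mm n * `|z|,
       (forall z z' eta, `|z| <= 1 -> `|z'| <= 1 -> 0 <= eta ->
         (forall e, E e -> `|t z e - t z' e| <= eta) -> forall x, `|L z x - L z' x| <= 2 ^+ n * eta) &
       forall z e, E e -> `|Rf z e - L z e| <= (1/2) ^+ n.+1 * `|z|].

Lemma step_ex n Rf : exists L, Hyp Rf n -> Props L Rf n.
Proof.
have [[h1 h2 h3 h4]|nh] := pselect (Hyp Rf n); last by exists (fun _ _ => 0).
have [||L HL] := @approx Rf (mm n) (2 ^+ n) ((1/2) ^+ n.+1) (mm0 n) _ _ h1 h2 h3 h4.
- by rewrite exprn_ge0.
- by rewrite exprn_gt0 // divr_gt0.
by exists L => _.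
Qed.

Definition stepL n Rf := proj1_sig (cid (step_ex n Rf)).
Lemma stepLP n Rf : Hyp Rf n -> Props (stepL n Rf) Rf n.
Proof. exact: (proj2_sig (cid (step_ex n Rf))). Qed.

Fixpoint res (n : nat) : Z -> T -> R :=
  if n is k.+1 then (fun z x => res k z x - stepL k (res k) z x) else t.

Lemma res_hyp n : Hyp (res n) n.
Proof.
elim: n => [|n [h1 h2 h3 h4]].
  split => //=.
  - exact: tlinE.
  - exact: tE_bound.
  by move=> z z' eta z1 z'1 eta0 hz e Ee; rewrite expr0 mul1r; exact: hz.
have [l1 l2 l3 l4 l5] := stepLP (And4 h1 h2 h3 h4).
split => /=.
- by move=> z; apply: ctsB.
- by move=> a z w e Ee; rewrite h2 // l2; ring.
- by move=> z e Ee; exact: l5.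
move=> z z' eta z1 z'1 eta0 hz e Ee.
have -> : res n z e - stepL n (res n) z e - (res n z' e - stepL n (res n) z' e) =
  (res n z e - res n z' e) - (stepL n (res n) z e - stepL n (res n) z' e) by ring.
apply: le_trans (ler_normB _ _) _.
rewrite (_ : 2 ^+ n.+1 * eta = 2 ^+ n * eta + 2 ^+ n * eta); last by rewrite exprS; ring.
by apply: lerD; [exact: h4|exact: l4].
Qed.

Definition Lk n := stepL n (res n).
Lemma LkP n : Props (Lk n) (res n) n.
Proof. by have [h1 h2 h3 h4] := res_hyp n; exact: stepLP. Qed.

Lemma res_cts n z : continuous (res n z).
Proof. by have [] := res_hyp n. Qed.

Definition psum n z x := t z x - res n z x.

Lemma psumS n z x : psum n.+1 z x = psum n z x + Lk n z x.
Proof. by rewrite /psum /= /Lk; ring. Qed.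

Lemma psum_lin n a z w x : psum n (a *: z + w) x = a * psum n z x + psum n w x.
Proof.
elim: n => [|n IH]; first by rewrite /psum /= !subrr; ring.
by rewrite !psumS IH; have [_ l2 _ _ _] := LkP n; rewrite l2; ring.
Qed.

Lemma psum_cts n z : continuous (psum n z).
Proof. by apply: ctsB => //; exact: res_cts. Qed.

Lemma psum_diff n d z x :
  `|psum (n + d) z x - psum n z x| <= 2 * (M + 1) * `|z| * ((1/2) ^+ n - (1/2) ^+ (n + d)).
Proof.
elim: d => [|d IH]; first by rewrite addn0 !subrr normr0 mulr0.
rewrite addnS psumS.
have [_ _ l3 _ _] := LkP (n + d).
have h1 := l3 z x.
have h2 := mm_le (n + d).
rewrite (_ : psum (n + d) z x + Lk (n + d) z x - psum n z x =
   (psum (n + d) z x - psum n z x) + Lk (n + d) z x); last by ring.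
apply: le_trans (ler_normD _ _) _.
have h3 : mm (n + d) * `|z| <= (M + 1) * (1/2) ^+ (n + d) * `|z|.
  by apply: ler_wpM2r.
rewrite exprS.
set q := (1/2 : R) ^+ (n + d) in h2 h3 IH *.
set Mz := (M + 1) * `|z| in IH *.
have -> : 2 * (M + 1) * `|z| * ((1 / 2) ^+ n - 1 / 2 * q) =
    2 * (M + 1) * `|z| * ((1 / 2) ^+ n - q) + (M + 1) * q * `|z| by field.
by apply: lerD => //; apply: le_trans h1 h3.
Qed.

Unset Implicit Arguments.

Definition Kz (z : Z) := 2 * (M + 1) * `|z|.

Lemma Kz0 z : 0 <= Kz z.
Proof. by rewrite /Kz !mulr_ge0 // addr_ge0 // M0. Qed.

Lemma psum_cauchy z x n k : (n <= k)%N -> `|psum k z x - psum n z x| <= Kz z * (1/2) ^+ n.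
Proof.
move=> nk; rewrite -(subnKC nk); apply: le_trans (psum_diff _ _ _ _) _.
apply: ler_wpM2l; first exact: Kz0.
by rewrite lerBlDr lerDl exprn_ge0 // divr_ge0.
Qed.

Lemma psum_cvg z x : cvgn (fun n => psum n z x).
Proof.
apply: cauchy_cvgn => eps e0; have [N hN] := half_small (Kz z) e0.
by exists N => n Nn; apply: le_trans (psum_cauchy z x _ _ Nn) (ltW hN).
Qed.

Definition Sl z x := limn (fun n => psum n z x).

Lemma Sl_near z x n : `|Sl z x - psum n z x| <= Kz z * (1/2) ^+ n.
Proof. by apply: lim_bound; [exact: psum_cvg | move=> k; exact: psum_cauchy]. Qed.

Lemma Sl_bound z x : `|Sl z x| <= Kz z.
Proof. by have := Sl_near z x 0; rewrite /psum /= subrr subr0 expr0 mulr1. Qed.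

Lemma Sl_E z e : E e -> Sl z e = t z e.
Proof.
move=> Ee; apply/eqP; rewrite -subr_eq0; apply/eqP.
apply: (@half_zero _ _ (Kz z + (M + 1) * `|z|)) => n.
have h1 := Sl_near z e n.
have [_ _ h3 _] := res_hyp n.
have h2 := le_trans (h3 z e Ee) (ler_wpM2r (normr_ge0 z) (mm_le n)).
have -> : Sl z e - t z e = (Sl z e - psum n z e) - res n z e by rewrite /psum; ring.
apply: le_trans (ler_normB _ _) _.
rewrite mulrDl; apply: lerD => //.
by rewrite mulrAC.
Qed.

Lemma Sl_lin a z w x : Sl (a *: z + w) x = a * Sl z x + Sl w x.
Proof.
apply/eqP; rewrite -subr_eq0; apply/eqP.
apply: (@half_zero _ _ (Kz (a *: z + w) + `|a| * Kz z + Kz w)) => n.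
have h1 := Sl_near (a *: z + w) x n.
have h2 := Sl_near z x n.
have h3 := Sl_near w x n.
have -> : Sl (a *: z + w) x - (a * Sl z x + Sl w x) =
   (Sl (a *: z + w) x - psum n (a *: z + w) x) - a * (Sl z x - psum n z x)
   - (Sl w x - psum n w x) by rewrite psum_lin; ring.
apply: le_trans (ler_normB _ _) _.
rewrite !mulrDl; apply: lerD => //.
apply: le_trans (ler_normB _ _) _; apply: lerD => //.
by rewrite normrM -mulrA ler_wpM2l.
Qed.

Lemma Sl_cts z : continuous (Sl z).
Proof.
move=> x; apply/cvgrPdist_le => eps e0.
have e3 : 0 < eps / 3 by rewrite divr_gt0.
have [n hn] := half_small (Kz z) e3.
have := @psum_cts n z x; move=> /cvgrPdist_le /(_ _ e3).
apply: filterS => y hy.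
have h1 := Sl_near z x n; have h2 := Sl_near z y n.
have -> : Sl z x - Sl z y = (Sl z x - psum n z x) + (psum n z x - psum n z y)
   - (Sl z y - psum n z y) by ring.
apply: le_trans (ler_normB _ _) _.
apply: le_trans (lerD (ler_normD _ _) (lexx _)) _.
have -> : eps = eps / 3 + eps / 3 + eps / 3 by field.
by rewrite !lerD // ltW // (le_lt_trans _ hn).
Qed.

Lemma psum_mod n z z' eta : `|z| <= 1 -> `|z'| <= 1 -> 0 <= eta ->
  (forall e, E e -> `|t z e - t z' e| <= eta) ->
  forall x, `|psum n z x - psum n z' x| <= (2 ^+ n - 1) * eta.
Proof.
move=> z1 z'1 eta0 hz x; elim: n => [|n IH].
  by rewrite /psum /= !subrr normr0 ?expr0 ?subrr mul0r.
rewrite !psumS.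
have [_ _ _ l4 _] := LkP n.
have h := l4 z z' eta z1 z'1 eta0 hz x.
have -> : psum n z x + Lk n z x - (psum n z' x + Lk n z' x) =
  (psum n z x - psum n z' x) + (Lk n z x - Lk n z' x) by ring.
apply: le_trans (ler_normD _ _) _.
rewrite (_ : (2 ^+ n.+1 - 1) * eta = (2 ^+ n - 1) * eta + 2 ^+ n * eta); last by rewrite exprS; ring.
exact: lerD.
Qed.

Lemma Sl_mod eps : 0 < eps -> exists2 eta, 0 < eta &
  forall z z', `|z| <= 1 -> `|z'| <= 1 ->
  (forall e, E e -> `|t z e - t z' e| <= eta) -> forall x, `|Sl z x - Sl z' x| <= eps.
Proof.
move=> e0; have e3 : 0 < eps / 3 by rewrite divr_gt0.
have [n hn] := half_small (2 * (M + 1)) e3.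
have pn : 0 < (2 : R) ^+ n by rewrite exprn_gt0.
exists (eps / 3 / 2 ^+ n); first by rewrite divr_gt0.
move=> z z' z1 z'1 hz x.
have h1 := Sl_near z x n; have h2 := Sl_near z' x n.
have h3 := psum_mod n z z' _ z1 z'1 (ltW (divr_gt0 e3 pn)) hz x.
have Kb u : `|u| <= 1 -> Kz u * (1/2) ^+ n <= eps / 3.
  move=> u1; apply: le_trans (ltW hn); rewrite /Kz -mulrA ler_wpM2l //.
    by rewrite mulr_ge0 // addr_ge0 // M0.
  by rewrite ler_piMl // exprn_ge0 // divr_ge0.
have h4 : (2 ^+ n - 1) * (eps / 3 / 2 ^+ n) <= eps / 3.
  rewrite (_ : (2 ^+ n - 1) * (eps / 3 / 2 ^+ n) = eps / 3 * ((2 ^+ n - 1) / 2 ^+ n)); last by ring.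
  by rewrite ger_pMr // ler_pdivrMr // mul1r lerBlDr lerDl.
have -> : Sl z x - Sl z' x = (Sl z x - psum n z x) + (psum n z x - psum n z' x)
   - (Sl z' x - psum n z' x) by ring.
apply: le_trans (ler_normB _ _) _.
apply: le_trans (lerD (ler_normD _ _) (lexx _)) _.
have -> : eps = eps / 3 + eps / 3 + eps / 3 by field.
rewrite !lerD //.
- exact: le_trans h1 (Kb _ z1).
- exact: le_trans h3 h4.
- exact: le_trans h2 (Kb _ z'1).
Qed.

Lemma near_all_seq (zs : seq Z) (P : Z -> T -> Prop) (x : T) :
  (forall z', z' \in zs -> nbhs x (P z')) ->
  nbhs x [set y | forall z', z' \in zs -> P z' y].
Proof.
elim: zs => [_|z zs IH h]; first by apply: filterE => y z'; rewrite in_nil.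
have h1 := h z (mem_head _ _).
have h2 := IH (fun z' hz' => h z' (introT orP (or_intror hz') : z' \in z :: zs)).
apply: filterS (filterI h1 h2) => y [hy1 hy2] z'; rewrite in_cons => /orP[/eqP ->//|].
exact: hy2.
Qed.

Lemma Kz_ball z : `|z| <= 1 -> Kz z <= 2 * (M + 1).
Proof.
move=> z1; rewrite /Kz ler_piMr //.
by rewrite mulr_ge0 // addr_ge0 // M0.
Qed.

Definition Nf x := sup [set `|Sl z x| | z in (@unit_ball R Z)].

Lemma Nf_ub z x : `|z| <= 1 -> `|Sl z x| <= Nf x.
Proof.
move=> z1; apply: sup_upper_bound; last by exists z.
split; first by exists `|Sl z x|, z.
by exists (2 * (M + 1)) => _ [w w1 <-]; apply: le_trans (Sl_bound w x) (Kz_ball w w1).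
Qed.

Lemma Nf_le x B : (forall z, `|z| <= 1 -> `|Sl z x| <= B) -> Nf x <= B.
Proof.
move=> h; apply: ge_sup; last by move=> _ [w w1 <-]; exact: h.
by exists `|Sl 0 x|, 0 => //; rewrite /unit_ball /= normr0 ler01.
Qed.

Lemma Nf_E e : E e -> Nf e <= M.
Proof.
move=> Ee; apply: Nf_le => z z1; rewrite Sl_E //.
apply: le_trans (@tE_bound z e Ee) _.
by rewrite ler_piMr // M0.
Qed.

Lemma Nf_cts : continuous Nf.
Proof.
move=> x; apply/cvgrPdist_le => eps e0.
have e3 : 0 < eps / 3 by rewrite divr_gt0.
have [eta eta0 Hm] := Sl_mod (eps / 3) e3.
have [zs [zsb zsnet]] := NET eta0.
have : \forall y \near x, forall z', z' \in zs -> `|Sl z' x - Sl z' y| <= eps / 3.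
  apply: near_all_seq => z' _.
  by have := Sl_cts z' x; move=> /cvgrPdist_le /(_ _ e3).
apply: filterS => y hy.
have key z : `|z| <= 1 -> `|Sl z x - Sl z y| <= eps.
  move=> z1; have [z' z'in hz'] := zsnet z z1.
  have k1 := Hm z z' z1 (zsb z' z'in) hz' x.
  have k2 := Hm z z' z1 (zsb z' z'in) hz' y.
  have k3 := hy z' z'in.
  have -> : Sl z x - Sl z y = (Sl z x - Sl z' x) + (Sl z' x - Sl z' y) - (Sl z y - Sl z' y) by ring.
  apply: le_trans (ler_normB _ _) _.
  apply: le_trans (lerD (ler_normD _ _) (lexx _)) _.
  have -> : eps = eps / 3 + eps / 3 + eps / 3 by field.
  by rewrite !lerD.
have a1 : Nf y <= Nf x + eps.
  apply: Nf_le => z z1; have h1 := key z z1; have h2 := Nf_ub z x z1.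
  have hb : `|Sl z y| <= `|Sl z x| + `|Sl z x - Sl z y|.
    by rewrite {1}(_ : Sl z y = Sl z x - (Sl z x - Sl z y)); [exact: ler_normB | ring].
  lra.
have a2 : Nf x <= Nf y + eps.
  apply: Nf_le => z z1; have h1 := key z z1; have h2 := Nf_ub z y z1.
  have hb : `|Sl z x| <= `|Sl z y| + `|Sl z x - Sl z y|.
    by rewrite {1}(_ : Sl z x = Sl z y + (Sl z x - Sl z y)); [exact: ler_normD | ring].
  lra.
rewrite ler_norml; apply/andP; split; lra.
Qed.

Lemma Nf0 x : 0 <= Nf x.
Proof. by apply: le_trans (Nf_ub 0 x _); rewrite ?normr_ge0 // normr0 ler01. Qed.

Section Pos.
Hypothesis Mpos : 0 < M.

Definition hf x := M / Num.max M (Nf x).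
Definition sl z x := hf x * Sl z x.

Lemma mx_pos x : 0 < Num.max M (Nf x).
Proof. by rewrite lt_max Mpos. Qed.

Lemma hf_cts : continuous hf.
Proof.
apply: ctsM; first exact: ctsC.
apply: ctsV; first by move=> x; rewrite gt_eqF // mx_pos.
by apply: ctsMax; [exact: ctsC|exact: Nf_cts].
Qed.

Lemma hf0 x : 0 <= hf x.
Proof. by rewrite divr_ge0 // ?ltW // mx_pos. Qed.

Lemma hf1 x : hf x <= 1.
Proof. by rewrite ler_pdivrMr ?mx_pos // mul1r le_max lexx. Qed.

Lemma hfE e : E e -> hf e = 1.
Proof.
move=> Ee; rewrite /hf (_ : Num.max M (Nf e) = M); last exact/max_idPl/Nf_E.
by rewrite divff // gt_eqF.
Qed.

Lemma sl_cts z : continuous (sl z).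
Proof. by apply: ctsM; [exact: hf_cts|exact: Sl_cts]. Qed.

Lemma sl_lin a z w x : sl (a *: z + w) x = a * sl z x + sl w x.
Proof. by rewrite /sl Sl_lin; ring. Qed.

Lemma sl_E z e : E e -> sl z e = t z e.
Proof. by move=> Ee; rewrite /sl hfE // mul1r Sl_E. Qed.

Lemma sl_bound z x : `|z| <= 1 -> `|sl z x| <= M.
Proof.
move=> z1; rewrite /sl normrM ger0_norm ?hf0 //.
apply: le_trans (ler_wpM2l (hf0 x) (Nf_ub z x z1)) _.
by rewrite /hf -mulrA ger_pMr // mulrC ler_pdivrMr ?mx_pos // mul1r le_max lexx orbT.
Qed.

Lemma sl_mod z z' x : `|sl z x - sl z' x| <= `|Sl z x - Sl z' x|.
Proof.
rewrite /sl -mulrBr normrM ger0_norm ?hf0 //.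
by rewrite ler_piMl // hf1.
Qed.

Lemma sl_compact : compact_op supnorm sl.
Proof.
rewrite /compact_op /seq_rel_compact => u hu.
have : forall n, exists z, `|z| <= 1 /\ sl z = u n.
  by move=> n; have [z z1 <-] := hu n; exists z.
move=> /choice [zn hzn].
have [n|phi [inc [g0 [cg0 cv0]]]] := @tc' (fun n => t (zn n)).
  by exists (zn n) => //; exact: (hzn n).1.
exists phi; split => //.
pose v n x := sl (zn (phi n)) x.
have vc : forall eps, 0 < eps -> exists N, forall n k, (N <= n)%N -> (N <= k)%N ->
    forall x, `|v k x - v n x| <= eps.
  move=> eps e0; have [eta eta0 Hm] := Sl_mod eps e0.
  have eta2 : 0 < eta / 2 by rewrite divr_gt0.
  move: (cv0) => /cvgrPdist_le /(_ _ eta2) [N _ HN].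
  exists N => n k Nn Nk x.
  have hq m : (N <= m)%N -> forall e, E e -> `|t (zn (phi m)) e - g0 e| <= eta / 2.
    move=> Nm e Ee; have := HN m Nm; rewrite sub0r normrN ger0_norm ?qnorm_ge0 //.
    apply: le_trans; have := qnorm_ge hcpt (ctsB (@tc (zn (phi m))) cg0) Ee; exact.
  apply: le_trans (sl_mod _ _ _) _; apply: Hm; [exact: (hzn _).1|exact: (hzn _).1|].
  move=> e Ee; have k1 := hq k Nk e Ee; have k2 := hq n Nn e Ee.
  have -> : t (zn (phi k)) e - t (zn (phi n)) e =
    (t (zn (phi k)) e - g0 e) - (t (zn (phi n)) e - g0 e) by ring.
  apply: le_trans (ler_normB _ _) _.
  by rewrite (splitr eta) lerD.
have cv x : cvgn (fun n => v n x).
  apply: cauchy_cvgn => eps e0; have [N hN] := vc eps e0.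
  by exists N => n Nn; exact: hN.
pose G x := limn (fun n => v n x).
have Gb eps : 0 < eps -> exists N, forall n, (N <= n)%N -> forall x, `|G x - v n x| <= eps.
  move=> e0; have [N hN] := vc eps e0; exists N => n Nn x.
  apply: lim_bound; first exact: cv.
  by move=> k nk; apply: hN => //; exact: leq_trans nk.
exists G; split.
  move=> x; apply/cvgrPdist_le => eps e0.
  have e3 : 0 < eps / 3 by rewrite divr_gt0.
  have [n hn] := Gb _ e3.
  have := sl_cts (zn (phi n)) x; move=> /cvgrPdist_le /(_ _ e3).
  apply: filterS => y hy.
  have h1 := hn n (leqnn n) x; have h2 := hn n (leqnn n) y.
  have -> : G x - G y = (G x - v n x) + (v n x - v n y) - (G y - v n y) by ring.
  apply: le_trans (ler_normB _ _) _.
  apply: le_trans (lerD (ler_normD _ _) (lexx _)) _.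
  have -> : eps = eps / 3 + eps / 3 + eps / 3 by field.
  by rewrite !lerD.
apply/cvgrPdist_le => eps e0; have [N hN] := Gb eps e0.
exists N => // n Nn /=.
rewrite sub0r normrN ger0_norm ?supnorm_ge0 // -(hzn (phi n)).2.
by apply: supnorm_le => [|x]; [exact: ltW | rewrite distrC; exact: hN].
Qed.

Lemma sl_J z : J (fun x => sl z x - t z x).
Proof.
split; first by apply: ctsB; [exact: sl_cts|exact: tc].
by move=> e Ee; rewrite sl_E // subrr.
Qed.

Lemma sl_norm : op_norm supnorm sl = M.
Proof.
have ne : [set supnorm (sl z) | z in (@unit_ball R Z)] !=set0.
  by exists (supnorm (sl 0)), 0 => //; rewrite /unit_ball /= normr0 ler01.
have ub : forall z, `|z| <= 1 -> supnorm (sl z) <= M.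
  by move=> z z1; apply: supnorm_le => [|x]; [exact: M0|exact: sl_bound].
apply/eqP; rewrite eq_le; apply/andP; split.
  by apply: ge_sup => // _ [z z1 <-]; exact: ub.
apply: ge_sup.
  by exists (qnorm J (t 0)), 0 => //; rewrite /unit_ball /= normr0 ler01.
move=> _ [z z1 <-].
have hJ : J (fun x => t z x - sl z x).
  have [c h] := sl_J z; split; first by apply: ctsB; [exact: tc|exact: sl_cts].
  by move=> e Ee; rewrite sl_E // subrr.
apply: le_trans (qnorm_le (t z) hJ) _.
have -> : (fun x => t z x - (t z x - sl z x)) = sl z by apply: funext => x; ring.
apply: sup_upper_bound; last by exists z.
by split => //; exists M => _ [w w1 <-]; exact: ub.
Qed.


End Pos.

Lemma supnorm0 : supnorm (fun _ : T => 0 : R) = 0.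
Proof.
apply/eqP; rewrite eq_le supnorm_ge0 andbT.
by apply: supnorm_le => // x; rewrite normr0.
Qed.

Lemma main_lift : exists s : Z -> T -> R,
    [/\ (forall z, continuous (s z)),
        (forall (a : R) (z w : Z) (x : T), s (a *: z + w) x = a * s z x + s w x),
        compact_op supnorm s,
        (forall z, J (fun x => s z x - t z x)) &
        op_norm supnorm s = op_norm (qnorm J) t].
Proof.
have [Mp|Mle] := ltP 0 M.
  exists sl; split.
  - exact: (sl_cts Mp).
  - exact: sl_lin.
  - exact: (sl_compact Mp).
  - exact: (sl_J Mp).
  - exact: (sl_norm Mp).
have MZ : M = 0 by apply/eqP; rewrite eq_le Mle M0.
exists (fun _ _ => 0); split.
- by move=> z; exact: ctsC.
- by move=> a z w x; rewrite mulr0 addr0.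
- rewrite /compact_op /seq_rel_compact => u hu.
  exists id; split => //; exists (fun _ => 0); split; first exact: ctsC.
  have -> : (fun n => supnorm (fun x => u (id n) x - 0)) = fun _ => 0.
    apply: funext => n; have [z _ <-] := hu n.
    by rewrite /= (_ : (fun _ : T => 0 - 0) = fun _ => 0) ?supnorm0 // subrr.
  exact: cvg_cst.
- move=> z; split; first by apply: ctsB; [exact: ctsC|exact: tc].
  move=> e Ee; have := @tE_bound z e Ee; rewrite MZ mul0r normr_le0 => /eqP ->.
  by rewrite subrr.
- rewrite -/M MZ; apply/eqP; rewrite eq_le; apply/andP; split.
    apply: ge_sup; first by exists (supnorm (fun _ : T => 0 : R)), 0 => //; rewrite /unit_ball /= normr0 ler01.
    by move=> _ [z _ <-]; rewrite supnorm0.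
  rewrite {1}(esym supnorm0); apply: sup_upper_bound.
    split; first by exists (supnorm (fun _ : T => 0 : R)), 0 => //; rewrite /unit_ball /= normr0 ler01.
    by exists 0 => _ [z _ <-]; rewrite supnorm0.
  by exists 0 => //; rewrite /unit_ball /= normr0 ler01.
Qed.

End Main.

Theorem mainTheorem1 (T : topologicalType) (R : realType) (E : set T)
  (hcpt : compact [set: T]) (hhaus : hausdorff_space T) (hE : closed E) :
  @CQLP_C T R [set f : T -> R | continuous f /\ forall e, E e -> f e = 0].
Proof.
move=> Z t tc tlin tcomp.
exact: (@main_lift T R E hcpt hE Z t tc tlin tcomp).
Qed.
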